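(* Let $K$ be a field of characteristic zero and $n\geq 2$. If $\sigma$ is a Lie algebra automorphism of $\mathfrak{Div}_n^c$ such that $\sigma(\partial)=\partial$ for all $\partial\in\mathfrak{Div}_n^0$, then $\sigma$ is the identity.
   Context: $S_n=K[[x_1,\ldots,x_n]]$, $\partial_i=\partial/\partial x_i$, and $\operatorname{Der}_K(S_n)=\bigoplus_i S_n\partial_i$ is the Lie algebra of $K$-derivations of $S_n$ with the commutator bracket. For $\partial=\sum_i a_i\partial_i$, $\operatorname{div}(\partial)=\sum_i\partial a_i/\partial x_i$. $\mathfrak{Div}_n^0=\{\partial\in\operatorname{Der}_K(S_n)\mid\operatorname{div}(\partial)=0\}$ and $\mathfrak{Div}_n^c=\{\partial\in\operatorname{Der}_K(S_n)\mid\operatorname{div}(\partial)\in K\}$. *)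

(* Defs.v *)
(* Formal power series K[[x_1..x_n]] as coefficient functions on monomials. *)
From HB Require Import structures.
From mathcomp Require Import all_boot all_order all_algebra.
Set Implicit Arguments. Unset Strict Implicit. Unset Printing Implicit Defensive.
Import Order.TTheory GRing.Theory.
Local Open Scope ring_scope.

Section PowerSeries.
Variables (K : fieldType) (n : nat).

Definition mon := {ffun 'I_n -> nat}.
Definition mon0 : mon := [ffun => 0%N].

Definition series := mon -> K.

Definition pderiv (i : 'I_n) (f : series) : series :=
  fun m => (m i).+1%:R * f [ffun j => (m j + (j == i))%N].

Definition smul (f g : series) : series :=
  fun m => \sum_(a : {ffun 'I_n -> 'I_(\sum_(j < n) m j).+1} | [forall j, (a j <= m j)%N])
             f [ffun j => nat_of_ord (a j)] * g [ffun j => (m j - a j)%N].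

(* a derivation sum_i a_i d_i of S_n, given by its coefficients a_i *)
Definition der := 'I_n -> series.

Definition dadd (d e : der) : der := fun i m => d i m + e i m.
Definition dscale (c : K) (d : der) : der := fun i m => c * d i m.

(* commutator bracket [sum a_i d_i, sum b_j d_j] = sum_j (sum_i a_i d_i b_j - b_i d_i a_j) d_j *)
Definition lie (d e : der) : der :=
  fun j m => \sum_(i < n) (smul (d i) (pderiv i (e j)) m - smul (e i) (pderiv i (d j)) m).

Definition div (d : der) : series := fun m => \sum_(i < n) pderiv i (d i) m.

Definition Div0 (d : der) : Prop := forall m, div d m = 0.
(* Div_n^c : divergence is a constant of K (coefficients of nonconstant monomials vanish) *)
Definition Divc (d : der) : Prop := forall m, m != mon0 -> div d m = 0.

Definition lie_aut_Divc (sigma : der -> der) : Prop :=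
  (forall d, Divc d -> Divc (sigma d)) /\
  (forall d e, Divc d -> Divc e -> sigma (dadd d e) = dadd (sigma d) (sigma e)) /\
  (forall (c : K) d, Divc d -> sigma (dscale c d) = dscale c (sigma d)) /\
  (forall d e, Divc d -> Divc e -> sigma (lie d e) = lie (sigma d) (sigma e)) /\
  (forall d e, Divc d -> Divc e -> sigma d = sigma e -> d = e) /\
  (forall e, Divc e -> exists d, Divc d /\ sigma d = e).

End PowerSeries.

(* Main.v *)
Require Import Defs.
From mathcomp Require Import all_boot all_order all_algebra.
From Stdlib Require Import FunctionalExtensionality.
Set Implicit Arguments. Unset Strict Implicit. Unset Printing Implicit Defensive.
Import Order.TTheory GRing.Theory.
Local Open Scope ring_scope.

Section Aux.
Variables (K : fieldType) (n : nat).

Definition zero : series K n := fun _ => 0.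
Definition one : series K n := fun m => if m == mon0 n then 1 else 0.
Definition unitm (j : 'I_n) : mon n := [ffun k => nat_of_bool (k == j)].
Definition Xs (j : 'I_n) : series K n := fun m => if m == unitm j then 1 else 0.

Lemma smul_single (f g : series K n) (m : mon n)
  (a0 : {ffun 'I_n -> 'I_(\sum_(j < n) m j).+1}) :
  (forall j, a0 j <= m j)%N ->
  (forall a : {ffun 'I_n -> 'I_(\sum_(j < n) m j).+1}, (forall j, a j <= m j)%N -> a != a0 ->
      f [ffun j => nat_of_ord (a j)] * g [ffun j => (m j - a j)%N] = 0) ->
  smul f g m = f [ffun j => nat_of_ord (a0 j)] * g [ffun j => (m j - a0 j)%N].
Proof.
move=> Ha0 H; rewrite /smul (bigD1 a0) /=; last by apply/forallP.
rewrite [X in _ + X = _]big1 ?addr0 // => a /andP[/forallP Ha ne]; exact: H.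
Qed.

Lemma ord0_le (m : mon n) : forall j, ((@ord0 (\sum_(j < n) m j)) <= m j)%N.
Proof. by []. Qed.

Definition a0 (m : mon n) : {ffun 'I_n -> 'I_(\sum_(j < n) m j).+1} := [ffun => ord0].

Lemma smul_mon0 (f g : series K n) : smul f g (mon0 n) = f (mon0 n) * g (mon0 n).
Proof.
rewrite (@smul_single _ _ _ (a0 (mon0 n))).
- congr (f _ * g _); apply/ffunP => j; rewrite !ffunE //.
- by move=> j; rewrite ffunE.
- move=> a Ha; case/eqP; apply/ffunP => j; rewrite !ffunE; apply/val_inj => /=.
  by have := Ha j; rewrite ffunE; case: (nat_of_ord (a j)).
Qed.

Lemma smul_f0 (f : series K n) m : smul f zero m = 0.
Proof. by rewrite /smul [LHS]big1 // => a _; rewrite /zero mulr0. Qed.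

Lemma smul_0g (g : series K n) m : smul zero g m = 0.
Proof. by rewrite /smul [LHS]big1 // => a _; rewrite /zero mul0r. Qed.

Lemma smul_1g (g : series K n) m : smul one g m = g m.
Proof.
rewrite (@smul_single _ _ _ (a0 m)).
- rewrite /one ifT; last by apply/eqP/ffunP => j; rewrite !ffunE.
  rewrite mul1r; congr g; apply/ffunP => j; rewrite !ffunE subn0 //.
- by move=> j; rewrite ffunE.
- move=> a Ha ne; rewrite /one ifF ?mul0r //; apply/negbTE; apply: contra ne.
  move/eqP/ffunP => E; apply/eqP/ffunP => j; apply/val_inj.
  by have := E j; rewrite !ffunE.
Qed.

Lemma le_sum (m : mon n) j : (m j <= \sum_(i < n) m i)%N.
Proof. by rewrite (bigD1 j) //= leq_addr. Qed.

Lemma smul_f1 (f : series K n) m : smul f one m = f m.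
Proof.
pose b : {ffun 'I_n -> 'I_(\sum_(j < n) m j).+1} := [ffun j => inord (m j)].
have hb j : nat_of_ord (b j) = m j by rewrite ffunE inordK // ltnS le_sum.
clearbody b.
rewrite (@smul_single _ _ _ b).
- rewrite /one ifT; last by apply/eqP/ffunP => j; rewrite !ffunE hb subnn.
  rewrite mulr1; congr f; apply/ffunP => j; rewrite !ffunE hb //.
- by move=> j; rewrite hb.
- move=> a Ha ne; rewrite /one ifF ?mulr0 //; apply/negbTE; apply: contra ne.
  move/eqP/ffunP => E; apply/eqP/ffunP => j; apply/val_inj.
  have := E j; rewrite !ffunE /= hb => /eqP; rewrite subn_eq0 => h.
  by apply/eqP; rewrite eqn_leq h Ha.
Qed.


Definition shift (m : mon n) (i : 'I_n) : mon n := [ffun j => (m j + (j == i))%N].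
Lemma pderivE i (f : series K n) m : pderiv i f m = (m i).+1%:R * f (shift m i).
Proof. by []. Qed.

Lemma shift_ne0 m i : shift m i != mon0 n.
Proof.
apply/negP => /eqP/ffunP/(_ i); rewrite !ffunE eqxx addn1 //.
Qed.

Lemma Xs_shift m l j : Xs j (shift m l) = if (l == j) && (m == mon0 n) then 1 else 0.
Proof.
rewrite /Xs; case: (boolP ((l == j) && (m == mon0 n))) => [/andP[/eqP E1 /eqP E2]|h].
  subst; rewrite ifT //; apply/eqP/ffunP => k; rewrite !ffunE //.
rewrite ifF //; apply/negbTE/negP => /eqP/ffunP E; move: h.
have El := E l; rewrite !ffunE eqxx addn1 in El.
case: (eqVneq l j) El => [E3|//] _ /=; subst.
move/negP; apply; apply/eqP/ffunP => k; have := E k; rewrite !ffunE.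
by case: (k == j) => /=; [rewrite addn1; case => -> | rewrite addn0].
Qed.

Lemma pderiv_Xs l j : pderiv l (Xs j) = if l == j then one else zero.
Proof.
apply: functional_extensionality => m; rewrite pderivE Xs_shift.
case: (eqVneq l j) => _ /=; last by rewrite mulr0 /=; case: (l==j).
rewrite /one; case: (eqVneq m (mon0 n)) => [->|_]; last by rewrite mulr0.
by rewrite ffunE mulr1.
Qed.

Lemma pderiv_zero i : pderiv i zero = zero.
Proof. by apply: functional_extensionality => m; rewrite pderivE /zero mulr0. Qed.

Lemma pderiv_one i : pderiv i one = zero.
Proof.
apply: functional_extensionality => m; rewrite pderivE /one ifF ?mulr0 //.
exact/negbTE/shift_ne0.
Qed.

Definition ed (j : 'I_n) : der K n := fun k => if k == j then one else zero.
Definition exd (j i : 'I_n) : der K n := fun k => if k == i then Xs j else zero.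

Lemma pderiv_ed l j k : pderiv l (ed j k) = zero.
Proof. by rewrite /ed; case: (k == j); [rewrite pderiv_one | rewrite pderiv_zero]. Qed.

Lemma pderiv_exd l j i k : pderiv l (exd j i k) = if (k == i) && (l == j) then one else zero.
Proof. by rewrite /exd; case: (k == i); [rewrite pderiv_Xs | rewrite pderiv_zero]. Qed.

Lemma lie_ed (X : der K n) j k m : lie X (ed j) k m = - pderiv j (X k) m.
Proof.
rewrite /lie sumrB.
rewrite [X in X - _]big1 ?sub0r; last by move=> l _; rewrite pderiv_ed smul_f0.
congr (- _); rewrite (bigD1 j) //= [X in _ + X]big1 ?addr0.
  by rewrite /ed eqxx smul_1g.
by move=> l /negbTE hl; rewrite /ed hl smul_0g.
Qed.

Lemma lie_exd (X : der K n) j i k m :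
  lie X (exd j i) k m = (if k == i then X j m else 0) - smul (Xs j) (pderiv i (X k)) m.
Proof.
rewrite /lie sumrB; congr (_ - _).
  under eq_bigr do rewrite pderiv_exd.
  case: (k == i) => /=; last by rewrite big1 // => l _; rewrite smul_f0.
  rewrite (bigD1 j) //= [X in _ + X]big1 ?addr0.
    by rewrite eqxx smul_f1.
  by move=> l /negbTE hl; rewrite hl smul_f0.
rewrite (bigD1 i) //= [X in _ + X]big1 ?addr0.
  by rewrite /exd eqxx.
by move=> l /negbTE hl; rewrite /exd hl smul_0g.
Qed.

Lemma divE (D : der K n) m : div D m = \sum_(k < n) (m k).+1%:R * D k (shift m k).
Proof. by []. Qed.

End Aux.

Theorem lemma1p8 (K : fieldType) (n : nat) (sigma : der K n -> der K n) :
  [pchar K] =i pred0 -> (2 <= n)%N ->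
  lie_aut_Divc sigma ->
  (forall d, Div0 d -> sigma d = d) ->
  forall d, Divc d -> sigma d = d.
Proof.
move=> hc hn [hDc [hadd [hscale [hlie [hinj hsurj]]]]] hfix d hd.
have n0 : (0 < n)%N by apply: leq_trans hn.
pose i0 : 'I_n := Ordinal n0.
pose i1 : 'I_n := Ordinal hn.
pose H := exd K i0 i0.
have HkE : forall k m, H k m = if k == i0 then Xs K i0 m else 0.
  by move=> k m; rewrite /H /exd; case: (k == i0).
have divH : forall m, div H m = one K m.
  move=> m; rewrite divE (bigD1 i0) //= big1 ?addr0.
    rewrite HkE eqxx (Xs_shift K) eqxx /= /one.
    by case: eqVneq => [->|_]; rewrite ?ffunE ?mulr1 ?mulr0.
  by move=> k /negbTE hk; rewrite HkE hk mulr0.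
have HDc : Divc H by move=> m hm; rewrite divH /one (negbTE hm).
have ed0 : forall j : 'I_n, Div0 (ed K j).
  move=> j m.
rewrite divE big1 // => k _; rewrite /ed; case: (k == j);
    last by rewrite /zero mulr0.
  by rewrite /one ifF ?mulr0 //; exact/negbTE/shift_ne0.
have exd0 : forall j i : 'I_n, i != j -> Div0 (exd K j i).
  move=> j i hij m; rewrite divE big1 // => k _; rewrite /exd.
  case: eqVneq => [->|_]; last by rewrite /zero mulr0.
  by rewrite (Xs_shift K) (negbTE hij) mulr0.
have led0 : forall j : 'I_n, Div0 (lie H (ed K j)).
  move=> j m; rewrite divE big1 // => k _.
  rewrite lie_ed pderivE HkE; case: (k == i0); last by rewrite !mulr0 oppr0 mulr0.
  by rewrite (Xs_shift K) (negbTE (shift_ne0 _ _)) andbF !mulr0 oppr0 mulr0.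
have lexd0 : forall j i : 'I_n, i != j -> Div0 (lie H (exd K j i)).
  move=> j i hij m; rewrite divE big1 // => k _.
  rewrite lie_exd /H pderiv_exd.
  have -> : (if k == i then exd K i0 i0 j (shift m k) else 0) = 0.
    case: eqVneq => [Eki|] //; rewrite /exd; case: eqVneq => [Eji|] //.
    by rewrite (Xs_shift K) Eki -Eji (negbTE hij).
  case: ifP => [/andP[/eqP Ek /eqP Ei]|_]; last by rewrite smul_f0 subr0 mulr0.
  by rewrite smul_f1 (Xs_shift K) Ek -Ei (negbTE hij) subr0 mulr0.
have Div0c : forall D : der K n, Div0 D -> Divc D by move=> D h m _; exact: h.
have key1 : forall j k m, pderiv j (sigma H k) m = pderiv j (H k) m.
  move=> j k m; have E := hlie H (ed K j) HDc (Div0c _ (ed0 j)).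
  rewrite (hfix _ (ed0 j)) (hfix _ (led0 j)) in E.
  by have := congr1 (fun D => D k m) E; rewrite /= !lie_ed => /oppr_inj <-.
have key2 : forall k m, m != mon0 n -> sigma H k m = H k m.
  move=> k m hm.
  have : ~~ [forall l, m l == 0%N].
    apply: contra hm => /forallP h; apply/eqP/ffunP => l; rewrite ffunE; exact/eqP.
  case/forallPn => l hl.
  pose m' : mon n := [ffun j => (m j - (j == l))%N].
  have Em : shift m' l = m.
    apply/ffunP => j; rewrite !ffunE; case: eqVneq => [->|_]; last by rewrite !subn0 addn0.
    by rewrite subnK // lt0n.
  have := key1 l k m'; rewrite !pderivE Em; apply: mulfI.
  by move/pcharf0P: hc => ->.
have key3 : forall j, sigma H j (mon0 n) = H j (mon0 n).
  move=> j; pose i := if j == i0 then i1 else i0.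
  have hij : i != j.
    rewrite /i; case: (eqVneq j i0) => [->|ne]; [by apply/eqP => /(congr1 val) | by rewrite eq_sym].
  have E := hlie H (exd K j i) HDc (Div0c _ (exd0 j i hij)).
  rewrite (hfix _ (exd0 _ _ hij)) (hfix _ (lexd0 _ _ hij)) in E.
  have := congr1 (fun D => D i (mon0 n)) E; rewrite /= !lie_exd eqxx !smul_mon0 /Xs ifF ?mul0r ?subr0 //.
  apply/negbTE/negP => /eqP/ffunP/(_ j); rewrite !ffunE eqxx //.
have sH : sigma H = H.
  apply: functional_extensionality => k; apply: functional_extensionality => m.
  by case: (eqVneq m (mon0 n)) => [->|hm]; [exact: key3 | exact: key2].
pose c := div d (mon0 n).
pose d0 : der K n := fun k m => d k m - c * H k m.
have Ed : d = dadd d0 (dscale c H).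
  apply: functional_extensionality => k; apply: functional_extensionality => m.
  by rewrite /dadd /dscale /d0 subrK.
have d0D : Div0 d0.
  move=> m; have -> : div d0 m = div d m - c * div H m.
    rewrite !divE mulr_sumr -sumrB; apply: eq_bigr => k _; by rewrite /d0 mulrBr mulrCA.
  rewrite divH /one; case: eqVneq => [->|hm]; first by rewrite mulr1 subrr.
  by rewrite hd // mulr0 subr0.
have scD : Divc (dscale c H).
  move=> m hm; have -> : div (dscale c H) m = c * div H m.
    rewrite !divE mulr_sumr; apply: eq_bigr => k _; by rewrite /dscale mulrCA.
  by rewrite divH /one (negbTE hm) mulr0.
rewrite [in LHS]Ed hadd ?hscale ?sH ?(hfix _ d0D).
- by rewrite -Ed.
- exact: HDc.
- exact: Div0c.
- exact: scD.
Qed.
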